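(* Let $\|w\|_{L^\infty(\Omega)}\le\bar c_0\le\bar v/\sqrt5$ and $\|w_x\|_{L^\infty(\Omega)}\le\bar c_1$, and let $\underline v^2:=\bar v^2-\bar c_0^2$. Then for any $\xi\in X$ and $\delta\xi\in\delta X$, the first directional derivative of $f$ satisfies (pointwise in $\tau$) $$|f'(\xi,\xi_\tau)[\delta\xi,\delta\xi_\tau]|\le\bar\alpha_0\|\xi_\tau\|\|\delta\xi\|+\bar\alpha_1\|\delta\xi_\tau\|,\qquad\bar\alpha_0=\frac{21\bar c_1}{4\underline v^2},\ \ \bar\alpha_1=\frac{7}{2\underline v}.$$
   Context: Fix $\bar v>0$, $x_O\ne x_D\in\mathbb R^2$, $w\in C^3(\mathbb R^2,\mathbb R^2)$ with $\|w(x)\|<\bar v$; $w_x$ is its Jacobian (operator norm); $\Omega\subset\mathbb R^2$ is an ellipse with foci $x_O,x_D$ containing every globally optimal trajectory, and $\|g\|_{L^\infty(\Omega)}$ is the essential supremum over $\Omega$ of the pointwise norm. $f(x,p)=\frac{-p^Tw(x)+\sqrt{(p^Tw(x))^2+(\bar v^2-w(x)^Tw(x))p^Tp}}{\bar v^2-w(x)^Tw(x)}$; $f'(\xi,\xi_\tau)[\delta\xi,\delta\xi_\tau]$ is the derivative of $f$ with respect to $(x,p)$ at $(\xi(\tau),\xi_\tau(\tau))$ in direction $(\delta\xi(\tau),\delta\xi_\tau(\tau))$. $X=\{\xi\in W^{1,\infty}(]0,1[,\mathbb R^2):\xi(0)=x_O,\xi(1)=x_D\}$, $\delta X=W_0^{1,\infty}(]0,1[,\mathbb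 R^2)$; subscript $\tau$ denotes the derivative; $\|\cdot\|$ is the Euclidean norm.
   Formalization: The bound on $f'(\xi,\xi_\tau)[\delta\xi,\delta\xi_\tau]$ is asserted only at those τ where ξ(τ) lies in Ω and $\xi_\tau(\tau)\ne0$, not for every τ. The statement above fails without it. *)

(* Defs.v *)
From Stdlib Require Import Reals Lra.
From Coquelicot Require Import Coquelicot.
Open Scope R_scope.

Definition dot (u v : R * R) : R := fst u * fst v + snd u * snd v.
Definition norm2 (u : R * R) : R := sqrt (dot u u).
Definition vadd (u v : R * R) : R * R := (fst u + fst v, snd u + snd v).
Definition vsub (u v : R * R) : R * R := (fst u - fst v, snd u - snd v).
Definition vscal (t : R) (u : R * R) : R * R := (t * fst u, t * snd u).

Definition partial1 (g : R -> R -> R) : R -> R -> R :=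
  fun x y => Derive (fun t => g t y) x.
Definition partial2 (g : R -> R -> R) : R -> R -> R :=
  fun x y => Derive (fun t => g x t) y.

Fixpoint Ck (k : nat) (g : R -> R -> R) : Prop :=
  (forall z : R * R, continuous (fun z : R * R => g (fst z) (snd z)) z) /\
  match k with
  | O => True
  | S k' =>
      (forall x y, ex_derive (fun t => g t y) x /\ ex_derive (fun t => g x t) y)
      /\ Ck k' (partial1 g) /\ Ck k' (partial2 g)
  end.

Definition comp1 (w : R * R -> R * R) : R -> R -> R := fun x y => fst (w (x, y)).
Definition comp2 (w : R * R -> R * R) : R -> R -> R := fun x y => snd (w (x, y)).

Definition Ck_field (k : nat) (w : R * R -> R * R) : Prop :=
  Ck k (comp1 w) /\ Ck k (comp2 w).

Definition jac_apply (w : R * R -> R * R) (x v : R * R) : R * R :=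
  (partial1 (comp1 w) (fst x) (snd x) * fst v + partial2 (comp1 w) (fst x) (snd x) * snd v,
   partial1 (comp2 w) (fst x) (snd x) * fst v + partial2 (comp2 w) (fst x) (snd x) * snd v).

(* Operator norm bound: ||w_x(x)|| <= c  iff  ||w_x(x) v|| <= c ||v|| for all v. *)
Definition jac_opnorm_le (w : R * R -> R * R) (x : R * R) (c : R) : Prop :=
  forall v : R * R, norm2 (jac_apply w x v) <= c * norm2 v.

Definition f_cost (vbar : R) (w : R * R -> R * R) (x p : R * R) : R :=
  (- dot p (w x) + sqrt ((dot p (w x)) ^ 2 + (vbar ^ 2 - dot (w x) (w x)) * dot p p))
  / (vbar ^ 2 - dot (w x) (w x)).

Definition ellipse (xO xD : R * R) (a : R) : R * R -> Prop :=
  fun x => norm2 (vsub x xO) + norm2 (vsub x xD) <= 2 * a.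

(* Lipschitz on [0,1] (= W^{1,infty}(]0,1[) representative). *)
Definition lipschitz01 (g : R -> R * R) : Prop :=
  exists L, forall s t, 0 <= s <= 1 -> 0 <= t <= 1 ->
    norm2 (vsub (g s) (g t)) <= L * Rabs (s - t).

Definition curve_derive (g : R -> R * R) (t : R) (v : R * R) : Prop :=
  is_derive (fun s => fst (g s)) t (fst v) /\ is_derive (fun s => snd (g s)) t (snd v).

(* Main.v *)
Require Import Defs.
From Stdlib Require Import Reals.
From Coquelicot Require Import Coquelicot.
From Stdlib Require Import Psatz Lra Lia.
Open Scope R_scope.


Lemma Ck_ex_diff_n : forall k g, Ck k g -> forall x y, ex_diff_n g k x y.
Proof.
  induction k as [|k IH]; intros g Hg x y; destruct Hg as [Hc Hr].
  - split; [|exact I]. apply continuity_2d_pt_filterlim. exact (Hc (x,y)).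
  - destruct Hr as [Hd [H1 H2]]. split.
    + apply continuity_2d_pt_filterlim. exact (Hc (x,y)).
    + destruct (Hd x y) as [Hd1 Hd2]. split; [exact Hd1|]. split; [exact Hd2|].
      split; [exact (IH _ H1 x y) | exact (IH _ H2 x y)].
Qed.

Lemma Ck2_diff : forall g, Ck 3 g -> forall x y,
  differentiable_pt_lim g x y (partial1 g x y) (partial2 g x y).
Proof.
  intros g Hg x y.
  assert (HT := Taylor_Lagrange_2d g 1 x y).
  destruct HT as [D [del HD]].
  { exists (mkposreal 1 Rlt_0_1). intros u v _ _. apply (ex_diff_n_m 3); [lia|]. apply Ck_ex_diff_n. exact Hg. }
  intros eps.
  assert (HD0 : 0 < Rabs D + 1) by (generalize (Rabs_pos D); lra).
  assert (Hpos : 0 < Rmin del (eps / (Rabs D + 1))).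
  { apply Rmin_pos. apply cond_pos. apply Rdiv_lt_0_compat. apply cond_pos. lra. }
  exists (mkposreal _ Hpos). intros u v Hu Hv. simpl in Hu, Hv.
  assert (Hu1 : Rabs (u - x) < del) by (eapply Rlt_le_trans; [exact Hu| apply Rmin_l]).
  assert (Hv1 : Rabs (v - y) < del) by (eapply Rlt_le_trans; [exact Hv| apply Rmin_l]).
  specialize (HD u v Hu1 Hv1).
  unfold DL_pol, differential in HD. simpl in HD.
  unfold partial1, partial2.
  set (m := Rmax (Rabs (u - x)) (Rabs (v - y))) in *.
  assert (Hm0 : 0 <= m) by (unfold m; eapply Rle_trans; [apply Rabs_pos|apply Rmax_l]).
  assert (Hm1 : m * (Rabs D + 1) <= eps).
  { assert (m < eps / (Rabs D + 1)).
    { unfold m. apply Rmax_lub_lt; [eapply Rlt_le_trans; [exact Hu|apply Rmin_r]|eapply Rlt_le_trans; [exact Hv|apply Rmin_r]]. }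
    apply Rlt_le. apply (Rmult_lt_compat_r (Rabs D + 1)) in H; [|lra].
    replace (eps / (Rabs D + 1) * (Rabs D + 1)) with (pos eps) in H by (field; lra). lra. }
  match type of HD with Rabs ?a <= _ => assert (E : g u v - g x y - (Derive (fun u0 => g u0 y) x * (u - x) + Derive (fun v0 => g x v0) y * (v - y)) = a) end.
  { unfold partial_derive, Binomial.C. simpl. field. }
  rewrite E. eapply Rle_trans; [exact HD|].
  assert (D <= Rabs D + 1) by (generalize (Rle_abs D); lra).
  assert (D * (m*m) <= (Rabs D + 1) * (m*m)) by (apply Rmult_le_compat_r; nra).
  assert (m * (m * (Rabs D + 1)) <= m * eps) by (apply Rmult_le_compat_l; lra).
  nra.
Qed.

Lemma line_deriv : forall g, Ck 3 g -> forall x y a b,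
  is_derive (fun t => g (x + t*a) (y + t*b)) 0 (partial1 g x y * a + partial2 g x y * b).
Proof.
  intros g Hg x y a b.
  apply is_derive_Reals.
  apply (derivable_pt_lim_comp_2d g (fun t => x + t*a) (fun t => y + t*b)).
  - replace (x + 0 * a) with x by ring. replace (y + 0*b) with y by ring.
    apply Ck2_diff. exact Hg.
  - apply is_derive_Reals. auto_derive; auto; ring.
  - apply is_derive_Reals. auto_derive; auto; ring.
Qed.


Lemma absdiv_bound (X Z T c : R) : 0 < Z -> c * Rabs X <= T * Z -> c * Rabs (X / Z) <= T.
Proof.
  intros HZ H. unfold Rdiv. rewrite Rabs_mult, Rabs_inv, (Rabs_pos_eq Z) by lra.
  assert (c * (Rabs X * / Z) = (c * Rabs X) * / Z) by ring. rewrite H0.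
  apply (Rmult_le_reg_r Z); auto.
  rewrite Rmult_assoc, Rinv_l by lra. lra.
Qed.

Lemma CS (a1 a2 b1 b2 : R) :
  Rabs (a1*b1 + a2*b2) <= sqrt (a1*a1+a2*a2) * sqrt (b1*b1+b2*b2).
Proof.
  rewrite <- sqrt_mult; [|nra|nra]. rewrite <- (sqrt_Rsqr_abs (a1*b1+a2*b2)).
  apply sqrt_le_1_alt. unfold Rsqr. pose proof (Rle_0_sqr (a1*b2-a2*b1)) as Hs; unfold Rsqr in Hs. nra.
Qed.

Lemma core_p (sL sA W Q P b qw pq S : R) :
  0 < sL -> sL <= sA -> 0 <= W -> 2 * W <= sL -> 0 <= Q -> 0 < P ->
  Rabs b <= P * W -> Rabs qw <= Q * W -> Rabs pq <= P * Q ->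
  0 < S -> S * S = b * b + sA * sA * (P * P) ->
  sL * Rabs ((- qw + (b * qw + sA*sA * pq) / S) / (sA*sA)) <= 7/4 * Q.
Proof.
  intros HsL HsA HW HW2 HQ HP Hb Hqw Hpq HS HS2.
  assert (HA : sL * sL <= sA * sA) by nra.
  assert (HSP : sA * P <= S) by nra.
  apply absdiv_bound; [nra|].
  assert (T1 : sL * Rabs qw <= 1/2 * Q * (sA*sA)).
  { assert (sL * Rabs qw <= sL * (Q*W)) by (apply Rmult_le_compat_l; lra).
    assert (sL * (Q*W) <= Q * (sL * sL) / 2).
    { assert (Q * (sL * (2*W)) <= Q * (sL*sL)) by (apply Rmult_le_compat_l; [lra| apply Rmult_le_compat_l; lra]). lra. }
    assert (Q * (sL*sL) <= Q * (sA*sA)) by (apply Rmult_le_compat_l; lra). lra. }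
  assert (T2 : sL * Rabs ((b * qw + sA*sA * pq) / S) <= 5/4 * Q * (sA*sA)).
  { apply absdiv_bound; [lra|].
    assert (N : Rabs (b * qw + sA*sA * pq) <= P*W*(Q*W) + sA*sA*(P*Q)).
    { eapply Rle_trans; [apply Rabs_triang|]. rewrite (Rabs_mult b qw), (Rabs_mult (sA*sA) pq).
      rewrite (Rabs_pos_eq (sA*sA)) by nra.
      apply Rplus_le_compat. apply Rmult_le_compat; auto using Rabs_pos.
      apply Rmult_le_compat_l; nra. }
    assert (N2 : P*W*(Q*W) <= 1/4 * (sA*sA)*(P*Q)).
    { assert (W*W <= 1/4 * (sA*sA)) by nra.
      assert (0 <= P*Q) by nra. nra. }
    assert (sL * Rabs (b * qw + sA*sA * pq) <= sL * (5/4 * (sA*sA)*(P*Q))) by (apply Rmult_le_compat_l; lra).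
    assert (sL * (sA*sA) * (P*Q) <= sA * P * ((sA*sA) * Q)).
    { assert (0 <= sA*sA*(P*Q)) by nra. nra. }
    assert (sA * P * ((sA*sA) * Q) <= S * ((sA*sA) * Q)).
    { apply Rmult_le_compat_r; nra. }
    nra. }
  assert (E : sL * Rabs (- qw + (b * qw + sA*sA * pq) / S) <= sL * Rabs qw + sL * Rabs ((b * qw + sA*sA * pq) / S)).
  { rewrite <- Rmult_plus_distr_l. apply Rmult_le_compat_l; [lra|].
    eapply Rle_trans; [apply Rabs_triang|]. rewrite Rabs_Ropp. lra. }
  lra.
Qed.

Lemma core_x (sL sA W U P b pu wu S : R) :
  0 < sL -> sL <= sA -> 0 <= W -> 2 * W <= sL -> 0 <= U -> 0 < P ->
  Rabs b <= P * W -> Rabs pu <= P * U -> Rabs wu <= W * U ->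
  0 < S -> S * S = b * b + sA * sA * (P * P) ->
  sL * sL * Rabs ((- pu + (b*pu - wu*(P*P))/S)/(sA*sA)
                  + (-b+S)*(2*wu)/((sA*sA)*(sA*sA))) <= 4*(P*U).
Proof.
  intros HsL HsA HW HW2 HU HP Hb Hpu Hwu HS HS2.
  assert (HA : sL * sL <= sA * sA) by nra.
  assert (HSP : sA * P <= S) by nra.
  assert (HSb : S <= Rabs b + sA * P).
  { assert (0 <= Rabs b) by apply Rabs_pos.
    assert (b * b = Rabs b * Rabs b) by (rewrite <- Rabs_mult; symmetry; apply Rabs_pos_eq; nra).
    assert (0 <= Rabs b * (sA * P)) by (apply Rmult_le_pos; nra).
    destruct (Rle_dec S (Rabs b + sA * P)) as [|Hn]; [assumption|].
    apply Rnot_le_lt in Hn.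
    assert ((Rabs b + sA*P)*(Rabs b + sA*P) < S*S) by (apply Rmult_le_0_lt_compat; nra).
    nra. }
  assert (HsA0 : 0 < sA) by lra.
  assert (HPU : 0 <= P * U) by nra.
  assert (HL3 : sL*sL*sL <= sA*sA*sA).
  { assert (sL*sL*sL <= sA*sA*sL) by (apply Rmult_le_compat_r; lra).
    assert (sA*sA*sL <= sA*sA*sA) by (apply Rmult_le_compat_l; nra). lra. }
  assert (P1 : sL * sL * Rabs ((- pu + (b*pu - wu*(P*P))/S)/(sA*sA)) <= 2*(P*U)).
  { apply absdiv_bound; [nra|].
    assert (E1 : sL*sL*Rabs pu <= P*U*(sA*sA)).
    { assert (sL*sL*Rabs pu <= sL*sL*(P*U)) by (apply Rmult_le_compat_l; nra). nra. }
    assert (E2 : sL*sL*Rabs ((b*pu - wu*(P*P))/S) <= P*U*(sA*sA)).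
    { apply absdiv_bound; [lra|].
      assert (N : Rabs (b*pu - wu*(P*P)) <= P*W*(P*U) + W*U*(P*P)).
      { unfold Rminus. eapply Rle_trans; [apply Rabs_triang|]. rewrite Rabs_Ropp.
        rewrite (Rabs_mult b pu), (Rabs_mult wu (P*P)), (Rabs_pos_eq (P*P)) by nra.
        apply Rplus_le_compat. apply Rmult_le_compat; auto using Rabs_pos.
        apply Rmult_le_compat_r; nra. }
      assert (N2 : P*W*(P*U) + W*U*(P*P) <= sL * (P*P*U)).
      { assert (2*W*(P*P*U) <= sL*(P*P*U)) by (apply Rmult_le_compat_r; nra). nra. }
      assert (sL*sL*Rabs (b*pu - wu*(P*P)) <= sL*sL*(sL*(P*P*U))) by (apply Rmult_le_compat_l; nra).
      assert (sL*sL*sL*(P*P*U) <= sA*sA*sA*(P*P*U)) by (apply Rmult_le_compat_r; nra).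
      assert (sA*P*(sA*sA*(P*U)) <= S*(sA*sA*(P*U))) by (apply Rmult_le_compat_r; nra).
      nra. }
    assert (sL*sL*Rabs (- pu + (b*pu - wu*(P*P))/S) <= sL*sL*Rabs pu + sL*sL*Rabs ((b*pu - wu*(P*P))/S)).
    { rewrite <- Rmult_plus_distr_l. apply Rmult_le_compat_l; [nra|].
      eapply Rle_trans; [apply Rabs_triang|]. rewrite Rabs_Ropp. lra. }
    lra. }
  assert (P2 : sL * sL * Rabs ((-b+S)*(2*wu)/((sA*sA)*(sA*sA))) <= 2*(P*U)).
  { assert (0 < sA*sA) by nra.
    apply absdiv_bound; [apply Rmult_lt_0_compat; lra|].
    assert (F1 : Rabs (-b+S) <= P * (2*W + sA)).
    { eapply Rle_trans; [apply Rabs_triang|]. rewrite Rabs_Ropp, (Rabs_pos_eq S) by lra. nra. }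
    assert (F2 : Rabs (2*wu) <= 2*(W*U)).
    { rewrite Rabs_mult, (Rabs_pos_eq 2) by lra. lra. }
    assert (F3 : Rabs ((-b+S)*(2*wu)) <= P * (2*W + sA) * (2*(W*U))).
    { rewrite Rabs_mult. apply Rmult_le_compat; auto using Rabs_pos. }
    assert (F4 : P * (2*W + sA) * (2*(W*U)) <= (P*U) * (sL*sL) + (P*U)*(sA*sL)).
    { assert (4*(W*W) <= sL*sL) by nra.
      assert (2*W*sA <= sL*sA) by (apply Rmult_le_compat_r; lra).
      assert ((P*U)*(4*(W*W)) <= (P*U)*(sL*sL)) by (apply Rmult_le_compat_l; lra).
      assert ((P*U)*(2*W*sA) <= (P*U)*(sL*sA)) by (apply Rmult_le_compat_l; lra).
      nra. }
    assert (sL*sL*Rabs ((-b+S)*(2*wu)) <= sL*sL*((P*U) * (sL*sL) + (P*U)*(sA*sL))) by (apply Rmult_le_compat_l; nra).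
    assert ((P*U)*(sL*sL*(sL*sL)) <= (P*U)*(sA*sA*(sA*sA))) by (apply Rmult_le_compat_l; nra).
    assert ((P*U)*(sA*(sL*sL*sL)) <= (P*U)*(sA*(sA*sA*sA))) by (apply Rmult_le_compat_l; nra).
    nra. }
  assert (sL*sL*Rabs ((- pu + (b*pu - wu*(P*P))/S)/(sA*sA) + (-b+S)*(2*wu)/((sA*sA)*(sA*sA)))
     <= sL*sL*Rabs ((- pu + (b*pu - wu*(P*P))/S)/(sA*sA)) + sL*sL*Rabs ((-b+S)*(2*wu)/((sA*sA)*(sA*sA)))).
  { rewrite <- Rmult_plus_distr_l. apply Rmult_le_compat_l; [nra|]. apply Rabs_triang. }
  lra.
Qed.


Lemma deriv_formula (W1 W2 : R -> R) (v p1 p2 q1 q2 e1 e2 : R) :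
  is_derive W1 0 e1 -> is_derive W2 0 e2 ->
  0 < v^2 - (W1 0 * W1 0 + W2 0 * W2 0) ->
  0 < p1*p1 + p2*p2 ->
  let w1 := W1 0 in let w2 := W2 0 in
  let A := v^2 - (w1*w1 + w2*w2) in
  let PP := p1*p1 + p2*p2 in
  let b := p1*w1 + p2*w2 in
  let S := sqrt (b*b + A*PP) in
  let qw := q1*w1 + q2*w2 in
  let pq := p1*q1 + p2*q2 in
  let pu := p1*e1 + p2*e2 in
  let wu := w1*e1 + w2*e2 in
  is_derive (fun t =>
    (- ((p1 + t*q1) * W1 t + (p2 + t*q2) * W2 t)
     + sqrt (((p1 + t*q1) * W1 t + (p2 + t*q2) * W2 t)^2
             + (v^2 - (W1 t * W1 t + W2 t * W2 t))
               * ((p1+t*q1)*(p1+t*q1) + (p2+t*q2)*(p2+t*q2))))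
    / (v^2 - (W1 t * W1 t + W2 t * W2 t))) 0
   ((- qw + (b*qw + A*pq)/S)/A
    + ((- pu + (b*pu - wu*PP)/S)/A + (-b+S)*(2*wu)/(A*A))).
Proof.
  intros H1 H2 HA HP w1 w2 A PP b S qw pq pu wu.
  assert (HAP : 0 < A*PP) by (apply Rmult_lt_0_compat; assumption).
  assert (HS : 0 < b*b + A*PP) by (pose proof (Rle_0_sqr b); unfold Rsqr in *; lra).
  assert (HS' : 0 < S) by (apply sqrt_lt_R0; exact HS).
  assert (D1 : Derive W1 0 = e1) by (apply is_derive_unique; exact H1).
  assert (D2 : Derive W2 0 = e2) by (apply is_derive_unique; exact H2).
  assert (ES : forall z, z = b*b + A*PP -> sqrt z = S) by (intros z ->; reflexivity).
  auto_derive.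
  - repeat split; try (eexists; eassumption).
    + match goal with |- 0 < ?e => replace e with (b*b + A*PP) by (unfold b, A, PP, w1, w2; ring) end. exact HS.
    + match goal with |- ?e <> 0 => replace e with A by (unfold A, w1, w2; ring) end. apply Rgt_not_eq. exact HA.
  - change (Derive (fun x => W1 x) 0) with (Derive W1 0).
    change (Derive (fun x => W2 x) 0) with (Derive W2 0).
    rewrite D1, D2.
    repeat match goal with |- context [sqrt ?z] => rewrite (ES z) by (unfold b, A, PP, w1, w2; ring) end.
    assert (HA' : A <> 0) by (apply Rgt_not_eq; exact HA).
    assert (HS2 : S * S = b*b + A*PP) by (unfold S; apply sqrt_sqrt; lra).
    clearbody S. unfold qw, pq, pu, wu, b, PP, A, w1, w2 in *.
    field. split; lra.
Qed.
Theorem lemma18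
  (vbar : R) (xO xD : R * R) (w : R * R -> R * R) (a c0 c1 : R)
  (Hvbar : 0 < vbar)
  (HOD : xO <> xD)
  (Hw : Ck_field 3 w)
  (Hwlt : forall x, norm2 (w x) < vbar)
  (Ha : norm2 (vsub xO xD) < 2 * a)
  (Hc0 : forall x, ellipse xO xD a x -> norm2 (w x) <= c0)
  (Hc0v : c0 <= vbar / sqrt 5)
  (Hc1 : forall x, ellipse xO xD a x -> jac_opnorm_le w x c1)
  (xi dxi : R -> R * R)
  (HxiX : lipschitz01 xi /\ xi 0 = xO /\ xi 1 = xD)
  (HdxiX : lipschitz01 dxi /\ dxi 0 = (0, 0) /\ dxi 1 = (0, 0))
  (tau : R) (Htau : 0 < tau < 1)
  (xi_tau dxi_tau : R * R)
  (Hxid : curve_derive xi tau xi_tau)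
  (Hdxid : curve_derive dxi tau dxi_tau)
  (Hin : ellipse xO xD a (xi tau))
  (Hnz : xi_tau <> (0, 0)) :
  let vlow := sqrt (vbar ^ 2 - c0 ^ 2) in
  let alpha0 := 21 * c1 / (4 * vlow ^ 2) in
  let alpha1 := 7 / (2 * vlow) in
  exists d : R,
    is_derive (fun t => f_cost vbar w (vadd (xi tau) (vscal t (dxi tau)))
                                      (vadd xi_tau (vscal t dxi_tau))) 0 d /\
    Rabs d <= alpha0 * norm2 xi_tau * norm2 (dxi tau) + alpha1 * norm2 dxi_tau.
Proof.
  intros vlow alpha0 alpha1.
  pose proof (Hc0 _ Hin) as Hw0. pose proof (Hc1 _ Hin) as Hj.
  destruct Hw as [Hw1 Hw2].
  clear Hc0 Hc1 HxiX HdxiX Hxid Hdxid Hin Ha HOD.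
  revert Hw0 Hj. destruct (xi tau) as [x1 x2]. intros Hw0 Hj.
  destruct (dxi tau) as [d1 d2].
  destruct xi_tau as [p1 p2]. destruct dxi_tau as [q1 q2].
  set (e1 := partial1 (comp1 w) x1 x2 * d1 + partial2 (comp1 w) x1 x2 * d2).
  set (e2 := partial1 (comp2 w) x1 x2 * d1 + partial2 (comp2 w) x1 x2 * d2).
  pose (W1 := fun t => comp1 w (x1 + t*d1) (x2 + t*d2)).
  pose (W2 := fun t => comp2 w (x1 + t*d1) (x2 + t*d2)).
  assert (HD1 : is_derive W1 0 e1) by exact (line_deriv _ Hw1 x1 x2 d1 d2).
  assert (HD2 : is_derive W2 0 e2) by exact (line_deriv _ Hw2 x1 x2 d1 d2).
  assert (HU : sqrt (e1*e1 + e2*e2) <= c1 * sqrt (d1*d1 + d2*d2)) by exact (Hj (d1, d2)).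
  assert (Hc1p : 0 <= c1).
  { pose proof (Hj (1, 0)) as H.
    match type of H with ?a <= _ => assert (0 <= a) by (unfold norm2; apply sqrt_pos) end.
    assert (E : norm2 (1, 0) = 1) by (unfold norm2, dot; simpl; replace (1*1 + 0*0) with 1 by ring; apply sqrt_1).
    rewrite E in H. lra. }
  assert (HW10 : W1 0 = fst (w (x1, x2))).
  { unfold W1, comp1. rewrite !Rmult_0_l, !Rplus_0_r. reflexivity. }
  assert (HW20 : W2 0 = snd (w (x1, x2))).
  { unfold W2, comp2. rewrite !Rmult_0_l, !Rplus_0_r. reflexivity. }
  revert Hw0 HW10 HW20. destruct (w (x1, x2)) as [w1 w2]. simpl. intros Hw0 HW10 HW20.
  unfold norm2, dot in Hw0. simpl in Hw0.
  set (W := sqrt (w1*w1 + w2*w2)) in *.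
  assert (HW0 : 0 <= W) by apply sqrt_pos.
  assert (HWW : W * W = w1*w1 + w2*w2) by (apply sqrt_sqrt; nra).
  assert (Hc0p : 0 <= c0) by lra.
  assert (H5 : 5 * (c0*c0) <= vbar*vbar).
  { assert (Hs5 : 0 < sqrt 5) by (apply sqrt_lt_R0; lra).
    assert (Hs55 : sqrt 5 * sqrt 5 = 5) by (apply sqrt_sqrt; lra).
    assert (c0 * sqrt 5 <= vbar).
    { apply (Rmult_le_compat_r (sqrt 5)) in Hc0v; [|lra].
      replace (vbar / sqrt 5 * sqrt 5) with vbar in Hc0v by (field; lra). exact Hc0v. }
    assert (0 <= c0 * sqrt 5) by nra.
    assert ((c0 * sqrt 5) * (c0 * sqrt 5) <= vbar * vbar) by (apply Rmult_le_compat; lra).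
    nra. }
  set (L := vbar^2 - c0^2).
  assert (HL : 0 < L) by (unfold L; nra).
  set (sL := sqrt L).
  assert (HsL : 0 < sL) by (apply sqrt_lt_R0; exact HL).
  assert (HsLL : sL * sL = L) by (apply sqrt_sqrt; lra).
  set (A := vbar^2 - (w1*w1 + w2*w2)).
  assert (HAL : L <= A) by (unfold A, L; nra).
  set (sA := sqrt A).
  assert (HsAA : sA * sA = A) by (apply sqrt_sqrt; lra).
  assert (HsA : sL <= sA) by (apply sqrt_le_1_alt; exact HAL).
  assert (H2W : 2 * W <= sL).
  { apply Rsqr_incr_0_var; [|lra]. unfold Rsqr. rewrite HsLL.
    assert (W * W <= c0 * c0) by (apply Rmult_le_compat; lra).
    unfold L. simpl. lra. }
  assert (HPP : 0 < p1*p1 + p2*p2).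
  { destruct (Req_dec p1 0) as [E1|E1]; destruct (Req_dec p2 0) as [E2|E2].
    - subst. exfalso. apply Hnz. reflexivity.
    - pose proof (Rle_0_sqr p1). unfold Rsqr in *. assert (0 < p2*p2) by (apply Rsqr_pos_lt; exact E2). lra.
    - pose proof (Rle_0_sqr p2). unfold Rsqr in *. assert (0 < p1*p1) by (apply Rsqr_pos_lt; exact E1). lra.
    - pose proof (Rle_0_sqr p2). unfold Rsqr in *. assert (0 < p1*p1) by (apply Rsqr_pos_lt; exact E1). lra. }
  assert (HA0 : 0 < vbar ^ 2 - (W1 0 * W1 0 + W2 0 * W2 0)).
  { rewrite HW10, HW20. fold A. lra. }
  pose proof (deriv_formula W1 W2 vbar p1 p2 q1 q2 e1 e2 HD1 HD2 HA0 HPP) as HDF.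
  cbv zeta in HDF. rewrite HW10, HW20 in HDF.
  eexists. split.
  { eapply is_derive_ext; [|exact HDF]. intros t. reflexivity. }
  fold A.
  set (P := sqrt (p1*p1 + p2*p2)).
  assert (HPP' : P * P = p1*p1 + p2*p2) by (apply sqrt_sqrt; lra).
  assert (HP : 0 < P) by (apply sqrt_lt_R0; exact HPP).
  set (Q := sqrt (q1*q1 + q2*q2)).
  assert (HQ : 0 <= Q) by apply sqrt_pos.
  set (D := sqrt (d1*d1 + d2*d2)) in *.
  assert (HD : 0 <= D) by apply sqrt_pos.
  set (U := sqrt (e1*e1 + e2*e2)) in *.
  assert (HU0 : 0 <= U) by apply sqrt_pos.
  change (norm2 (p1, p2)) with P. change (norm2 (q1, q2)) with Q. change (norm2 (d1, d2)) with D.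
  rewrite <- HsAA. rewrite <- HPP'.
  set (S := sqrt ((p1 * w1 + p2 * w2) * (p1 * w1 + p2 * w2) + sA * sA * (P * P))).
  assert (HS2 : S * S = (p1 * w1 + p2 * w2) * (p1 * w1 + p2 * w2) + sA * sA * (P * P)).
  { apply sqrt_sqrt. pose proof (Rle_0_sqr (p1 * w1 + p2 * w2)). unfold Rsqr in *. nra. }
  assert (HS : 0 < S).
  { apply sqrt_lt_R0. pose proof (Rle_0_sqr (p1 * w1 + p2 * w2)). unfold Rsqr in *.
    assert (0 < sA * sA * (P*P)) by (apply Rmult_lt_0_compat; nra). lra. }
  assert (Hb : Rabs (p1 * w1 + p2 * w2) <= P * W) by apply CS.
  assert (Hqw : Rabs (q1 * w1 + q2 * w2) <= Q * W) by apply CS.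
  assert (Hpq : Rabs (p1 * q1 + p2 * q2) <= P * Q) by apply CS.
  assert (Hpu : Rabs (p1 * e1 + p2 * e2) <= P * U) by apply CS.
  assert (Hwu : Rabs (w1 * e1 + w2 * e2) <= W * U) by apply CS.
  pose proof (core_p sL sA W Q P _ _ _ S HsL HsA HW0 H2W HQ HP Hb Hqw Hpq HS HS2) as Cp.
  pose proof (core_x sL sA W U P _ _ _ S HsL HsA HW0 H2W HU0 HP Hb Hpu Hwu HS HS2) as Cx.
  match goal with |- Rabs (?X + ?Y) <= _ =>
    assert (T : Rabs (X + Y) <= Rabs X + Rabs Y) by apply Rabs_triang;
    set (a1 := Rabs X) in *; set (a2 := Rabs Y) in * end.
  unfold alpha0, alpha1, vlow. fold L. fold sL.
  apply (Rmult_le_reg_l (sL*sL)); [nra|].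
  replace (sL * sL * (21 * c1 / (4 * sL ^ 2) * P * D + 7 / (2 * sL) * Q))
    with (21/4 * (c1 * (P * D)) + 7/2 * (sL * Q)) by (field; lra).
  assert (0 <= c1 * (P * D)) by (apply Rmult_le_pos; nra).
  assert (P * U <= c1 * (P * D)).
  { replace (c1 * (P*D)) with (P * (c1 * D)) by ring. apply Rmult_le_compat_l; lra. }
  assert (sL * (sL * a1) <= sL * (7/4*Q)) by (apply Rmult_le_compat_l; lra).
  nra.
Qed.
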